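(* Let $N\ge1$ and $T=1$, and let $q$ be the normalized polynomial defined in the context. Then $$q(z)=2\tan\frac{\pi}{2(N+1)}\sum_{j=1}^{N}\Bigl(1-\frac{j}{N+1}\Bigr)\sin\frac{\pi j}{N+1}\,z^{j-1},$$ and $q(-1)=\tan^2\frac{\pi}{2(N+1)}$.
   Context: Fix integers $T\ge 1$, $N\ge1$. Set $\psi_j=\dfrac{\pi(2+T(2j-1))}{2+(N-1)T}$. Define $\eta(z)=z(z+1)\prod_{j=1}^{\frac{N-2}{2}}(z-e^{i\psi_j})(z-e^{-i\psi_j})$ if $N$ is even, and $\eta(z)=z\prod_{j=1}^{\frac{N-1}{2}}(z-e^{i\psi_j})(z-e^{-i\psi_j})$ if $N$ is odd (empty products equal $1$). Let $$q(z)=\frac{KT}{2+(N-1)T}\left(\Bigl(\frac1T+N\Bigr)\frac{\eta(z)}{z}-\eta'(z)\right),$$ where the constant $K$ is chosen so that $q(1)=1$. *)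

(* Defs.v *)
From Stdlib Require Import Reals List Arith.
Import ListNotations.
Open Scope R_scope.

Record Cx := mkC { Re : R; Im : R }.

Definition RtoC (x : R) : Cx := mkC x 0.
Definition Czero : Cx := RtoC 0.
Definition Cone : Cx := RtoC 1.
Definition Cadd (a b : Cx) : Cx := mkC (Re a + Re b) (Im a + Im b).
Definition Copp (a : Cx) : Cx := mkC (- Re a) (- Im a).
Definition Cmul (a b : Cx) : Cx :=
  mkC (Re a * Re b - Im a * Im b) (Re a * Im b + Im a * Re b).
Fixpoint Cpow (a : Cx) (n : nat) : Cx :=
  match n with O => Cone | S k => Cmul a (Cpow a k) end.
Definition Cexpi (theta : R) : Cx := mkC (cos theta) (sin theta).

(* ---------- polynomials: list of coefficients, constant term first ---------- *)
Definition poly := list Cx.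

Fixpoint padd (p q : poly) : poly :=
  match p, q with
  | [], _ => q
  | _, [] => p
  | a :: p', b :: q' => Cadd a b :: padd p' q'
  end.

Definition pscale (c : Cx) (p : poly) : poly := map (Cmul c) p.

Fixpoint pmul (p q : poly) : poly :=
  match p with
  | [] => []
  | a :: p' => padd (pscale a q) (Czero :: pmul p' q)
  end.

Definition pconst (c : Cx) : poly := [c].
Definition pX : poly := [Czero; Cone].
Definition pXsub (a : Cx) : poly := [Copp a; Cone].

Fixpoint pderiv_aux (k : nat) (p : poly) : poly :=
  match p with
  | [] => []
  | a :: p' => Cmul (RtoC (INR k)) a :: pderiv_aux (S k) p'
  end.
Definition pderiv (p : poly) : poly :=
  match p with [] => [] | _ :: p' => pderiv_aux 1 p' end.

(* division by z of a polynomial with zero constant term *)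
Definition pdivX (p : poly) : poly := tl p.

Fixpoint peval (p : poly) (z : Cx) : Cx :=
  match p with
  | [] => Czero
  | a :: p' => Cadd a (Cmul z (peval p' z))
  end.

Fixpoint pprod1 (n : nat) (f : nat -> poly) : poly :=
  match n with O => [Cone] | S k => pmul (pprod1 k f) (f (S k)) end.

Fixpoint Csum1 (n : nat) (f : nat -> Cx) : Cx :=
  match n with O => Czero | S k => Cadd (Csum1 k f) (f (S k)) end.

Definition psi (T N j : nat) : R :=
  PI * (2 + INR T * (2 * INR j - 1)) / (2 + (INR N - 1) * INR T).

Definition pairfac (T N j : nat) : poly :=
  pmul (pXsub (Cexpi (psi T N j))) (pXsub (Cexpi (- psi T N j))).

Definition eta (T N : nat) : poly :=
  if Nat.even N then
    pmul (pmul pX (pXsub (Copp Cone))) (pprod1 ((N - 2) / 2) (pairfac T N))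
  else
    pmul pX (pprod1 ((N - 1) / 2) (pairfac T N)).

(* q with normalizing constant K (K is chosen in the statement so q(1) = 1) *)
Definition q (T N : nat) (K : Cx) : poly :=
  pscale (Cmul K (RtoC (INR T / (2 + (INR N - 1) * INR T))))
    (padd (pscale (RtoC (1 / INR T + INR N)) (pdivX (eta T N)))
          (pscale (Copp Cone) (pderiv (eta T N)))).

(* Main.v *)
From HB Require Import structures.
From mathcomp Require Import all_boot all_order all_algebra.
From mathcomp Require Import Rstruct.
From mathcomp.real_closed Require Import complex.
Require Import Defs.
From Stdlib Require Import Reals Lra Lia.
Section Trig.
Local Open Scope R_scope.
Variable N : nat.
Definition alpha := PI / (INR N + 1).
Definition th (j : nat) := (2 * INR j + 1) * alpha.

Lemma psi_eq j : psi 1 N j = th j.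
Proof. rewrite /psi /th /alpha /=. field. pose proof (pos_INR N). lra. Qed.

Lemma N1pos : 0 < INR N + 1.
Proof. pose proof (pos_INR N); lra. Qed.

Lemma th_bounds j : 2 * INR j + 1 <= INR N -> 0 < th j < PI.
Proof.
move=> h1. have hN := N1pos. have hP := PI_RGT_0.
have h0 := pos_INR j.
rewrite /th /alpha; split.
  apply: Rmult_lt_0_compat; [lra| apply: Rdiv_lt_0_compat; lra].
have e : PI - (2 * INR j + 1) * (PI / (INR N + 1)) = PI * (INR N - 2 * INR j) / (INR N + 1) by field; lra.
have : 0 < PI * (INR N - 2 * INR j) / (INR N + 1).
  apply: Rdiv_lt_0_compat => //; apply: Rmult_lt_0_compat => //; lra.
lra.
Qed.

Lemma sin_th_pos j : 2 * INR j + 1 <= INR N -> 0 < sin (th j).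
Proof. move=> h; have [h1 h2] := th_bounds _ h; exact: sin_gt_0. Qed.

Lemma th_N1 j : INR (S N) * th j = PI + 2 * INR j * PI.
Proof. rewrite S_INR /th /alpha. field. exact: Rgt_not_eq N1pos. Qed.

Lemma sin_N1 j : sin (INR (S N) * th j) = 0.
Proof. by rewrite th_N1 sin_period sin_PI. Qed.

Lemma sin_N j : sin (INR N * th j) = sin (th j).
Proof.
have -> : INR N * th j = (PI - th j) + 2 * INR j * PI.
  rewrite /th /alpha. field. exact: Rgt_not_eq N1pos.
by rewrite sin_period sin_PI_x.
Qed.

Lemma sin_rec t n : sin (INR (S (S n)) * t) = 2 * cos t * sin (INR (S n) * t) - sin (INR n * t).
Proof.
have -> : INR (S (S n)) * t = INR (S n) * t + t by rewrite (S_INR (S n)); ring.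
have -> : INR n * t = INR (S n) * t - t by rewrite (S_INR n); ring.
rewrite sin_plus sin_minus. ring.
Qed.

Lemma cos_th_inj i j : 2 * INR i + 1 <= INR N -> 2 * INR j + 1 <= INR N -> i <> j -> cos (th i) <> cos (th j).
Proof.
move=> hi hj hij e.
have [a1 a2] := th_bounds _ hi. have [b1 b2] := th_bounds _ hj.
have := cos_inj _ _ (conj (Rlt_le _ _ a1) (Rlt_le _ _ a2)) (conj (Rlt_le _ _ b1) (Rlt_le _ _ b2)) e.
rewrite /th => e2.
have ha : alpha <> 0 by rewrite /alpha; apply: Rgt_not_eq; apply: Rdiv_lt_0_compat; [exact: PI_RGT_0|exact: N1pos].
have : 2 * INR i + 1 = 2 * INR j + 1 by apply: (Rmult_eq_reg_r alpha).
move=> e3; apply: hij; apply: INR_eq; lra.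
Qed.

Lemma cos_th_m1 j : 2 * INR j + 1 <= INR N -> cos (th j) <> -1.
Proof.
move=> hj e. have [a1 a2] := th_bounds _ hj.
rewrite -cos_PI in e.
have := cos_inj _ _ (conj (Rlt_le _ _ a1) (Rlt_le _ _ a2)) (conj (Rlt_le _ _ PI_RGT_0) (Rle_refl _)) e.
lra.
Qed.

Definition beta := PI / (2 * (INR N + 1)).
Lemma alpha_beta : alpha = 2 * beta.
Proof. rewrite /alpha /beta. field. exact: Rgt_not_eq N1pos. Qed.

Lemma beta_bounds : 1 <= INR N -> 0 < beta < PI / 2.
Proof.
move=> h1. have hP := PI_RGT_0.
rewrite /beta; split; first by apply: Rdiv_lt_0_compat; lra.
have e : PI / 2 - PI / (2 * (INR N + 1)) = PI * INR N / (2 * (INR N + 1)) by field; lra.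
have : 0 < PI * INR N / (2 * (INR N + 1)).
  apply: Rdiv_lt_0_compat; [apply: Rmult_lt_0_compat|]; lra.
lra.
Qed.

Lemma cos_beta_pos : 1 <= INR N -> 0 < cos beta.
Proof. move=> h; have [h1 h2] := beta_bounds h. apply: cos_gt_0; lra. Qed.

Lemma sin_beta_pos : 1 <= INR N -> 0 < sin beta.
Proof. move=> h; have [h1 h2] := beta_bounds h. apply: sin_gt_0; lra. Qed.

Lemma const1 : 1 <= INR N -> (2 - 2 * cos alpha) / sin alpha = 2 * tan beta.
Proof.
move=> h. have hc := cos_beta_pos h. have hs := sin_beta_pos h.
rewrite alpha_beta cos_2a_sin sin_2a /tan. field. lra.
Qed.

Lemma const2 : 1 <= INR N -> (2 - 2 * cos alpha) / (2 + 2 * cos alpha) = tan beta ^ 2.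
Proof.
move=> h. have hc := cos_beta_pos h. have hs := sin_beta_pos h.
have e := sin2_cos2 beta. unfold Rsqr in e.
rewrite alpha_beta cos_2a_cos /tan.
have -> : 2 - 2 * (2 * cos beta * cos beta - 1) = 4 * (sin beta * sin beta) by lra.
have -> : 2 + 2 * (2 * cos beta * cos beta - 1) = 4 * (cos beta * cos beta) by lra.
field. lra.
Qed.

Lemma sin_alpha_pos : 1 <= INR N -> 0 < sin alpha.
Proof.
move=> h. have hc := cos_beta_pos h. have hs := sin_beta_pos h.
rewrite alpha_beta sin_2a. apply: Rmult_lt_0_compat; [apply: Rmult_lt_0_compat|]; lra.
Qed.

Lemma cos_alpha_m1 : 1 <= INR N -> 2 + 2 * cos alpha <> 0.
Proof.
move=> h. have hc := cos_beta_pos h.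
rewrite alpha_beta cos_2a_cos. have := Rmult_lt_0_compat _ _ hc hc. lra.
Qed.

Lemma cos_alpha_1 : 1 <= INR N -> 2 - 2 * cos alpha <> 0.
Proof.
move=> h. have hs := sin_beta_pos h.
rewrite alpha_beta cos_2a_sin. have := Rmult_lt_0_compat _ _ hs hs. lra.
Qed.

Lemma coef_eq i : 1 <= INR N ->
  (2 - 2 * cos alpha) / (INR N + 1) * (INR N - INR i) * (sin (INR (S i) * alpha) / sin alpha)
  = 2 * tan beta * ((1 - INR (S i) / (INR N + 1)) * sin (PI * INR (S i) / (INR N + 1))).
Proof.
move=> h. have hsa := sin_alpha_pos h. have hN := N1pos.
have -> : PI * INR (S i) / (INR N + 1) = INR (S i) * alpha by rewrite /alpha; field; lra.
rewrite -const1 // S_INR. field. lra.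
Qed.

Lemma th0 : th 0 = alpha.
Proof. rewrite /th /=; ring. Qed.

Lemma q_const : 1 / INR 1 + INR N = INR (S N).
Proof. rewrite INR_1 S_INR; field. Qed.

Lemma k_const : INR 1 / (2 + (INR N - 1) * INR 1) = 1 / (INR N + 1).
Proof. rewrite /=. have := N1pos. move=> h. field; lra. Qed.
End Trig.

Section SeqR.
Local Open Scope R_scope.
Lemma sq0 t : sin (INR 0 * t) / sin t = 0.
Proof. rewrite /= Rmult_0_l sin_0 /Rdiv Rmult_0_l //. Qed.
Lemma sq1 t : sin t <> 0 -> sin (INR 1 * t) / sin t = 1.
Proof. move=> h; rewrite /= Rmult_1_l; field; exact h. Qed.
Lemma sqS t n : sin t <> 0 -> sin (INR (S (S n)) * t) / sin t =
   2 * cos t * (sin (INR (S n) * t) / sin t) - sin (INR n * t) / sin t.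
Proof. move=> h; rewrite sin_rec; field; exact h. Qed.
Lemma two_INR : 2 = INR 2.
Proof. simpl; ring. Qed.
End SeqR.

Definition mN (N : nat) : nat :=
  if Nat.even N then Nat.div (Nat.sub N 2) 2 else Nat.div (Nat.sub N 1) 2.

Lemma N_cases N : le 1 N ->
  (Nat.even N = true /\ N = Nat.add (Nat.mul 2 (mN N)) 2) \/
  (Nat.even N = false /\ N = Nat.add (Nat.mul 2 (mN N)) 1).
Proof.
move=> h; rewrite /mN.
case: (Nat.Even_or_Odd N) => [[k hk]|[k hk]].
  have he : Nat.even N = true by rewrite hk Nat.even_mul.
  rewrite he; left; split => //.
  have -> : Nat.sub N 2 = Nat.mul (Nat.sub k 1) 2 by lia.
  rewrite Nat.div_mul //; lia.
have he : Nat.even N = false by rewrite hk Nat.even_add Nat.even_mul.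
rewrite he; right; split => //.
have -> : Nat.sub N 1 = Nat.mul k 2 by lia.
rewrite Nat.div_mul //; lia.
Qed.

Section CxLevel.
Local Open Scope R_scope.
Lemma pairfac_eq N j : pairfac 1 N j = cons Cone (cons (RtoC (- (2 * cos (psi 1 N j)))) (cons Cone nil)).
Proof.
rewrite /pairfac /pXsub /=.
set t := psi 1 N j.
have h := sin2_cos2 t.
rewrite /Cone /RtoC /Cmul /Cadd /Cexpi /Czero /Copp /= cos_neg sin_neg.
f_equal; [|f_equal; [|f_equal]]; f_equal; unfold Rsqr in h; simpl; nra.
Qed.
End CxLevel.

Section Extra.
Local Open Scope R_scope.
Definition okj N j := 2 * INR j + 1 <= INR N.
Definition sinnz t := sin t <> 0.
Definition sr t n := sin (INR n * t) / sin t.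

Lemma okj_of N j : le (Nat.add (Nat.mul 2 j) 1) N -> okj N j.
Proof. move=> h; rewrite /okj; have := le_INR _ _ h; rewrite plus_INR mult_INR /=; lra. Qed.

Lemma one_le N : le 1 N -> 1 <= INR N.
Proof. move=> h; have := le_INR _ _ h; rewrite /=; lra. Qed.

Lemma sinnz_th N j : okj N j -> sinnz (th N j).
Proof. move=> h; apply: Rgt_not_eq; exact: sin_th_pos. Qed.

Lemma sr_N1 N j : sr (th N j) (S N) = 0.
Proof. by rewrite /sr sin_N1 /Rdiv Rmult_0_l. Qed.

Lemma sr_N N j : okj N j -> sr (th N j) N = 1.
Proof. move=> h; rewrite /sr sin_N; field; exact: sinnz_th. Qed.

Lemma sr0 t : sr t 0 = 0.
Proof. exact: sq0. Qed.
Lemma sr1 t : sinnz t -> sr t 1 = 1.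
Proof. exact: sq1. Qed.
Lemma srS t n : sinnz t -> sr t (S (S n)) = INR 2 * cos t * sr t (S n) - sr t n.
Proof. move=> h; rewrite /sr sqS // -two_INR //. Qed.

Lemma pairfac_eq2 N j : pairfac 1 N j = cons Cone (cons (RtoC (- (INR 2 * cos (th N j)))) (cons Cone nil)).
Proof. by rewrite pairfac_eq psi_eq -two_INR. Qed.

Lemma okj0 N : le 1 N -> okj N 0.
Proof. move=> h; have := one_le _ h; rewrite /okj /=; lra. Qed.

Lemma coef_eq' N i : le 1 N ->
  (2 - 2 * cos (th N 0)) / (INR N + 1) * (INR N - INR i) * sr (th N 0) (S i)
  = 2 * tan (PI / (2 * (INR N + 1))) * ((1 - INR (S i) / (INR N + 1)) * sin (PI * INR (S i) / (INR N + 1))).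
Proof. move=> h; rewrite th0 /sr; apply: coef_eq; exact: one_le. Qed.

Lemma const2' N : le 1 N ->
  (2 - 2 * cos (th N 0)) / (2 + 2 * cos (th N 0)) = tan (PI / (2 * (INR N + 1))) ^ 2.
Proof. move=> h; rewrite th0; apply: const2; exact: one_le. Qed.

Lemma cnz N : le 1 N -> 2 + 2 * cos (th N 0) <> 0.
Proof. move=> h; rewrite th0; apply: cos_alpha_m1; exact: one_le. Qed.
Lemma m1_eq : -1 = Ropp 1.
Proof. lra. Qed.
Definition kN N := 1 / (INR N + 1).
Lemma k_const' N : INR 1 / (2 + (INR N - 1) * INR 1) = kN N.
Proof. exact: k_const. Qed.
Definition c2t N := 2 * tan (PI / (2 * (INR N + 1))).
Definition cf N j := (1 - INR j / (INR N + 1)) * sin (PI * INR j / (INR N + 1)).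
Definition tq N := tan (PI / (2 * (INR N + 1))) ^ 2.
Definition dR N := 2 - 2 * cos (th N 0).
Definition eR N := 2 + 2 * cos (th N 0).
Lemma coef_eq2 N i : le 1 N -> dR N / (INR N + 1) * (INR N - INR i) * sr (th N 0) (S i) = c2t N * cf N (S i).
Proof. exact: coef_eq'. Qed.
Lemma const3 N : le 1 N -> dR N / eR N = tq N.
Proof. exact: const2'. Qed.
Lemma eR_nz N : le 1 N -> eR N <> 0.
Proof. exact: cnz. Qed.
End Extra.

From mathcomp Require Import ring lra zify.
Import Order.TTheory GRing.Theory Num.Theory.
Local Open Scope ring_scope.
Notation CC := (complex R).
Definition toC (a : Cx) : CC := complex.Complex (Defs.Re a) (Defs.Im a).
Definition rc (r : R) : CC := real_complex R r.
Lemma rcD x y : rc (x + y) = rc x + rc y.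
Proof. exact: rmorphD. Qed.
Lemma rcN x : rc (- x) = - rc x.
Proof. exact: rmorphN. Qed.
Lemma toC_R r : toC (RtoC r) = rc r.
Proof. by []. Qed.
Lemma rcM x y : rc (x * y) = rc x * rc y.
Proof. exact: rmorphM. Qed.
Lemma rcRM x y : rc (Rmult x y) = rc x * rc y.
Proof. exact: rmorphM. Qed.
Lemma rcRD x y : rc (Rplus x y) = rc x + rc y.
Proof. exact: rmorphD. Qed.
Lemma rc_nat n : rc (INR n) = n%:R.
Proof. by rewrite INRE /rc rmorph_nat. Qed.
Lemma toC_add a b : toC (Cadd a b) = toC a + toC b.
Proof. by case: a => ? ?; case: b => ? ?. Qed.
Lemma toC_mul a b : toC (Cmul a b) = toC a * toC b.
Proof. case: a => ? ?; case: b => ? ?. rewrite /toC /=. by rewrite !RplusE !RmultE !RminusE. Qed.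
Lemma toC_opp a : toC (Copp a) = - toC a.
Proof. by case: a => ? ?. Qed.
Lemma toC_inj a b : toC a = toC b -> a = b.
Proof. by case: a => ? ?; case: b => ? ? [-> ->]. Qed.
Lemma toC0 : toC Czero = 0. Proof. by []. Qed.
Lemma toC1 : toC Cone = 1. Proof. by []. Qed.

Fixpoint toP (l : list Cx) : {poly CC} :=
  match l with nil => 0 | cons a l' => toP l' * 'X + (toC a)%:P end.

Lemma peval_toP l z : toC (peval l z) = (toP l).[toC z].
Proof.
elim: l => [|a l IH] /=; first by rewrite horner0.
rewrite toC_add toC_mul IH !hornerE; ring.
Qed.

Lemma toP_padd p r : toP (padd p r) = toP p + toP r.
Proof.
elim: p r => [|a p IH] r; first by rewrite /= add0r.
case: r => [|b r]; first by rewrite /= addr0.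
rewrite /= IH toC_add polyCD; ring.
Qed.

Lemma toP_pscale c p : toP (pscale c p) = (toC c)%:P * toP p.
Proof.
elim: p => [|a p IH] /=; first by rewrite mulr0.
rewrite IH toC_mul polyCM; ring.
Qed.

Lemma toP_pmul p r : toP (pmul p r) = toP p * toP r.
Proof.
elim: p => [|a p IH] /=; first by rewrite mul0r.
rewrite toP_padd toP_pscale /= IH toC0 addr0; ring.
Qed.

Lemma toP_pderiv_aux k p :
  toP (pderiv_aux k p) = k%:R * toP p + 'X * deriv (toP p).
Proof.
elim: p k => [|a p IH] k /=; first by rewrite deriv0; ring.
rewrite IH toC_mul toC_R rc_nat !derivD !derivM derivX !derivC.
rewrite polyCM !polyC_natr -addn1 natrD. ring.
Qed.

Lemma toP_pderiv p : toP (pderiv p) = deriv (toP p).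
Proof.
case: p => [|a p] /=; first by rewrite deriv0.
rewrite toP_pderiv_aux derivD derivC derivM derivX. ring.
Qed.

Lemma toP_coef0 l : (toP l)`_0 = toC (head Czero l).
Proof. case: l => [|a l] /=; first by rewrite coef0 toC0. by rewrite coefD coefMX coefC /= add0r. Qed.

Lemma toP_tl l E : toP l = 'X * E -> toP (pdivX l) = E.
Proof.
move=> H; have h0 : toC (head Czero l) = 0 by rewrite -toP_coef0 H coefXM.
case: l H h0 => [|a l] /=.
  move=> H _; have: 'X * E == 0 by rewrite -H.
  by rewrite mulf_eq0 polyX_eq0 /= => /eqP ->.
move=> H ha; move: H; rewrite ha addr0 mulrC.
have hX : ('X : {poly CC}) != 0 by rewrite polyX_eq0.
exact: (mulfI hX).
Qed.


Definition Dc (c : CC) : {poly CC} := 'X^2 - (2%:R * c)%:P * 'X + 1.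

Section Cheb.
Variables (c : CC) (s : nat -> CC).
Hypotheses (s0 : s 0%N = 0) (s1 : s 1%N = 1)
  (sS : forall n, s n.+2 = 2%:R * c * s n.+1 - s n).

Lemma cheb n : exists r : {poly CC}, 'X^(n.+1) = (s n.+1)%:P * 'X - (s n)%:P + Dc c * r.
Proof.
elim: n => [|n [r IH]].
  exists 0; rewrite s0 s1 mulr0 addr0 expr1; ring.
exists ((s n.+1)%:P + 'X * r).
rewrite exprS IH sS /Dc polyCB !polyCM; ring.
Qed.

Lemma Qid n : (\sum_(i < n) (s i.+1)%:P * 'X^i) * Dc c
   = 1 - (s n.+1)%:P * 'X^n + (s n)%:P * 'X^(n.+1).
Proof.
elim: n => [|n IH].
  by rewrite big_ord0 s0 s1 mul0r; ring.
rewrite big_ord_recr /= mulrDl IH sS /Dc polyCB !polyCM !exprS; ring.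
Qed.
End Cheb.

Lemma coprime_of (p1 p2 a b : {poly CC}) (k : CC) :
  k != 0 -> a * p1 + b * p2 = k%:P -> coprimep p1 p2.
Proof.
move=> k0 H; apply/Bezout_eq1_coprimepP.
exists (k^-1%:P * a, k^-1%:P * b) => /=.
by rewrite -!mulrA -mulrDr H -polyCM mulVf.
Qed.

Lemma two_neq0 : (2%:R : CC) != 0.
Proof. by rewrite pnatr_eq0. Qed.

Lemma coprimeDc ca cb : ca != cb -> coprimep (Dc ca) (Dc cb).
Proof.
move=> ne; apply: (@coprime_of _ _ ((2%:R * (cb - ca))%:P - ('X - (2%:R * ca)%:P))
   ('X - (2%:R * ca)%:P) (2%:R * (cb - ca))).
  by rewrite mulf_neq0 ?two_neq0 // subr_eq0 eq_sym.
rewrite /Dc !polyCM polyCB; ring.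
Qed.

Lemma coprimeX1 c : c != -1 -> coprimep ('X + 1) (Dc c).
Proof.
move=> ne; apply: (@coprime_of _ _ (- ('X - 1 - (2%:R * c)%:P)) 1 (2%:R * (1 + c))).
  by rewrite mulf_neq0 ?two_neq0 // addrC addr_eq0.
rewrite /Dc !polyCM polyCD; ring.
Qed.

Lemma Dc_alt c : Dc c = ('X - (2%:R * c)%:P) * 'X + 1%:P.
Proof. rewrite /Dc; ring. Qed.

Lemma Dc_size c : size (Dc c) = 3%N.
Proof.
rewrite Dc_alt size_MXaddC size_XsubC.
have -> : ('X - (2%:R * c)%:P == 0) = false by rewrite -size_poly_eq0 size_XsubC.
by [].
Qed.

Lemma Dc_monic c : Dc c \is monic.
Proof.
rewrite monicE lead_coefE Dc_size /= Dc_alt coefD coefMX coefC /=.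
by rewrite coefB coefX coefC /= subr0 addr0.
Qed.

Lemma Dc_neq0 c : Dc c != 0.
Proof. by rewrite -size_poly_eq0 Dc_size. Qed.

Fixpoint PP0 (cs : nat -> CC) (k : nat) : {poly CC} :=
  match k with O => Dc (cs 0%N) | S k' => PP0 cs k' * Dc (cs k) end.

Section Prod.
Variables (cs : nat -> CC) (N m : nat).
Let F : {poly CC} := 'X^(N.+1) + 1.
Hypothesis Hdv : forall j, leq j m -> Dc (cs j) %| F.
Hypothesis Hne : forall i j, leq i m -> leq j m -> i <> j -> cs i != cs j.
Hypothesis Hm1 : forall j, leq j m -> cs j != -1.

Lemma PP0_monic k : PP0 cs k \is monic.
Proof. elim: k => [|k IH] /=; [exact: Dc_monic | by rewrite monicMr ?Dc_monic]. Qed.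

Lemma PP0_neq0 k : PP0 cs k != 0.
Proof. exact: monic_neq0 (PP0_monic k). Qed.

Lemma PP0_size k : size (PP0 cs k) = (2 * k + 3)%N.
Proof.
elim: k => [|k IH] /=; first by rewrite Dc_size.
rewrite size_mul ?PP0_neq0 ?Dc_neq0 // IH Dc_size.
lia.
Qed.

Lemma PP0_coprime j k : leq k.+1 j && leq j m -> coprimep (Dc (cs j)) (PP0 cs k).
Proof.
elim: k => [|k IH] /= /andP [hkj hjm].
  apply: coprimeDc; apply: Hne => //; lia.
rewrite coprimepMr IH; last by apply/andP; split; lia.
rewrite andTb; apply: coprimeDc; apply: Hne => //; lia.
Qed.

Lemma PP0_coprimeX k : leq k m -> coprimep ('X + 1) (PP0 cs k).
Proof.
elim: k => [|k IH] /= hk; first by apply: coprimeX1; apply: Hm1.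
rewrite coprimepMr IH; last by lia.
by rewrite andTb; apply: coprimeX1; apply: Hm1.
Qed.

Lemma PP0_dvd k : leq k m -> PP0 cs k %| F.
Proof.
elim: k => [|k IH] /= hk; first by apply: Hdv.
rewrite Gauss_dvdp ?IH ?Hdv //; try lia.
rewrite coprimep_sym; apply: PP0_coprime; apply/andP; split; lia.
Qed.

Lemma F_monic : F \is monic.
Proof. by rewrite /F monicXnaddC. Qed.

Lemma F_size : size F = N.+2.
Proof. by rewrite /F size_XnaddC. Qed.

Lemma prod_odd : N = (2 * m + 1)%N -> PP0 cs m = F.
Proof.
move=> hN; apply/eqP; rewrite -eqp_monic ?PP0_monic ?F_monic //.
rewrite -dvdp_size_eqp ?PP0_dvd // PP0_size F_size hN.
apply/eqP; lia.
Qed.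

Lemma prod_even : N = (2 * m + 2)%N -> 'X + 1 %| F -> ('X + 1) * PP0 cs m = F.
Proof.
move=> hN hX; apply/eqP; rewrite -eqp_monic ?monicMr ?PP0_monic ?F_monic //; last first.
  by rewrite -(polyC1) monicXaddC.
rewrite -dvdp_size_eqp; last by rewrite Gauss_dvdp ?PP0_dvd ?hX ?PP0_coprimeX.
have hX0 : ('X + 1 : {poly CC}) != 0 by rewrite -size_poly_eq0 -polyC1 size_XaddC.
rewrite size_mul ?PP0_neq0 // PP0_size F_size -polyC1 size_XaddC; apply/eqP; lia.
Qed.
End Prod.

Lemma rcRminus x y : rc (Rminus x y) = rc x - rc y.
Proof. exact: rmorphB. Qed.
Lemma rcRdiv x y : rc (Rdiv x y) = rc x / rc y.
Proof. exact: fmorph_div. Qed.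
Lemma rc_inj : injective rc.
Proof. exact: fmorph_inj. Qed.
Lemma rcR0 : rc (IZR Z0) = 0. Proof. exact: rmorph0. Qed.
Lemma rcR1 : rc (IZR (Zpos xH)) = 1. Proof. exact: rmorph1. Qed.

Section SeqC.
Variable t : R.
Hypothesis ht : sinnz t.
Lemma s0C : rc (sr t 0) = 0. Proof. by rewrite sr0 rcR0. Qed.
Lemma s1C : rc (sr t 1) = 1. Proof. by rewrite sr1 // rcR1. Qed.
Lemma sSC n : rc (sr t n.+2) = 2%:R * rc (cos t) * rc (sr t n.+1) - rc (sr t n).
Proof. by rewrite srS // rcRminus !rcRM rc_nat. Qed.
End SeqC.

Fixpoint PPc (f : nat -> CC) (k : nat) : {poly CC} :=
  match k with O => 1 | S k' => PPc f k' * Dc (f k) end.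

Lemma PPc_PP0 f k : Dc (f 0%N) * PPc f k = PP0 f k.
Proof. elim: k => [|k IH] /=; first by rewrite mulr1. by rewrite mulrA IH. Qed.

Lemma toC_pow z n : toC (Cpow z n) = toC z ^+ n.
Proof. elim: n => [|n IH] /=; first by rewrite expr0. by rewrite toC_mul IH exprS. Qed.

Lemma toC_sum n f : toC (Csum1 n f) = \sum_(i < n) toC (f i.+1).
Proof. elim: n => [|n IH] /=; first by rewrite big_ord0. by rewrite toC_add IH big_ord_recr. Qed.

Section Main.
Variables (N : nat) (HN : le 1 N) (K : Cx).
Let m := mN N.
Let cs j := rc (cos (th N j)).
Let F : {poly CC} := 'X^(N.+1) + 1.

Lemma okj_m j : leq j m -> okj N j.
Proof. move=> h; apply: okj_of; case: (N_cases _ HN) => [[_ e]|[_ e]]; rewrite -/m in e; lia. Qed.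

Lemma dvd_j j : leq j m -> Dc (cs j) %| F.
Proof.
move=> hj; have hs := sinnz_th _ _ (okj_m _ hj).
have [r hr] := @cheb (rc (cos (th N j))) (fun n => rc (sr (th N j) n)) (s0C _) (s1C _ hs) (sSC _ hs) N.
have e : F = Dc (cs j) * r.
  rewrite /F hr sr_N1 (sr_N _ _ (okj_m _ hj)) rcR0 rcR1; ring.
by rewrite e dvdp_mulIl.
Qed.

Lemma ne_j i j : leq i m -> leq j m -> i <> j -> cs i != cs j.
Proof.
move=> hi hj hij; apply/eqP => /rc_inj.
exact: cos_th_inj _ _ _ (okj_m _ hi) (okj_m _ hj) hij.
Qed.

Lemma m1_j j : leq j m -> cs j != -1.
Proof.
move=> hj; apply/eqP => e. apply: (cos_th_m1 _ _ (okj_m _ hj)).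
rewrite m1_eq; apply: rc_inj. rewrite -/(cs j) e. exact: (esym (rmorphN1 _)).
Qed.

Lemma rcRopp x : rc (Ropp x) = - rc x.
Proof. exact: rmorphN. Qed.

Lemma toP_pairfac j : toP (pairfac 1 N j) = Dc (cs j).
Proof.
rewrite pairfac_eq2 /= toC1 toC_R rcRopp rcRM ?rc_nat ?rcRD ?rcR1 /Dc /cs; ring.
Qed.

Lemma toP_pprod k : toP (pprod1 k (pairfac 1 N)) = PPc cs k.
Proof.
elim: k => [|k IH] /=; first by rewrite toC1; ring.
by rewrite toP_pmul IH toP_pairfac.
Qed.

Definition Em := if Nat.even N then ('X + 1) * PPc cs m else PPc cs m.

Lemma toP_eta : toP (eta 1 N) = 'X * Em.
Proof.
rewrite /eta /Em /m /mN; case: (Nat.even N); rewrite !toP_pmul toP_pprod /= ?toC_opp toC1 toC0 ?opprK; ring.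
Qed.

Lemma Em_F : Em * Dc (cs 0%N) = F.
Proof.
case: (N_cases _ HN) => [[he e]|[he e]]; rewrite -/m in e; rewrite /Em he.
  rewrite -mulrA [PPc _ _ * _]mulrC PPc_PP0.
  apply: (prod_even cs N m).
  - exact: dvd_j.
  - exact: ne_j.
  - exact: m1_j.
  - lia.
  have -> : ('X + 1 : {poly CC}) = 'X - (-1)%:P by rewrite polyCN opprK.
  rewrite -root_factor_theorem /root /F !hornerE -signr_odd.
  have -> : odd N.+1 = true.
    rewrite (_ : N.+1 = (m.+1).*2.+1); last by rewrite -mul2n; lia.
    by rewrite /= odd_double.
  by rewrite expr1 addNr.
rewrite mulrC PPc_PP0.
apply: (prod_odd cs N m).
- exact: dvd_j.
- exact: ne_j.
- lia.
Qed.

Definition Qp : {poly CC} := \sum_(i < N) (rc (sr (th N 0) i.+1))%:P * 'X^i.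

Lemma Q_F : Qp * Dc (cs 0%N) = F.
Proof.
have hs := sinnz_th _ _ (okj0 _ HN).
have h := @Qid (rc (cos (th N 0))) (fun n => rc (sr (th N 0) n)) (s0C _) (s1C _ hs) (sSC _ hs) N.
rewrite /Qp /cs h sr_N1 (sr_N _ _ (okj0 _ HN)) rcR0 rcR1 /F; ring.
Qed.

Lemma Em_Q : Em = Qp.
Proof. apply: (mulIf (Dc_neq0 (cs 0%N))); by rewrite Em_F Q_F. Qed.
End Main.


Lemma Gsum (a : nat -> CC) N n : leq n N ->
  (N.+1)%:R%:P * (\sum_(i < n) (a i)%:P * 'X^i) - deriv ('X * \sum_(i < n) (a i)%:P * 'X^i)
  = \sum_(i < n) ((N - i)%:R * a i)%:P * 'X^i.
Proof.
elim: n => [|n IH] hn; first by rewrite !big_ord0 !mulr0 deriv0 subr0.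
rewrite !big_ord_recr /= -IH; last by lia.
rewrite !mulrDr derivD.
have -> : deriv ('X * ((a n)%:P * 'X^n)) = (a n)%:P * ('X^n *+ n.+1).
  by rewrite mulrCA -exprS derivM derivC mul0r add0r derivXn.
rewrite natrB; last by lia.
set S := \sum_(i < n) _.
set D := ('X * S)^`().
rewrite polyCM polyCB -mulr_natr !polyC_natr -[n.+1]addn1 -[N.+1]addn1 !natrD.
ring.
Qed.

Lemma Dc_deriv c : deriv (Dc c) = 2%:R%:P * 'X - (2%:R * c)%:P.
Proof. rewrite /Dc -polyC1 !derivD derivN !derivM !derivX !derivC polyC_natr; ring. Qed.

Lemma rcR2 : rc (IZR (Zpos (xO xH))) = 2%:R.
Proof. by rewrite {1}two_INR rc_nat. Qed.

Lemma toP_q N K : le 1 N -> toP (q 1 N K) =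
  (toC K * rc (kN N))%:P * ((N.+1)%:R%:P * Qp N - deriv ('X * Qp N)).
Proof.
move=> HN.
rewrite /q toP_pscale toP_padd !toP_pscale toP_pderiv (toP_tl _ _ (toP_eta N)) toP_eta (Em_Q _ HN).
rewrite toC_mul !toC_R k_const' q_const rc_nat toC_opp toC1; ring.
Qed.

Lemma Q_eval N x : le 1 N -> (Qp N).[x] * (Dc (rc (cos (th N 0)))).[x] = x ^+ N.+1 + 1.
Proof. move=> HN; by rewrite -hornerM (Q_F _ HN) !hornerE. Qed.

Lemma Q'_eval N x : le 1 N ->
  (deriv (Qp N)).[x] * (Dc (rc (cos (th N 0)))).[x]
  + (Qp N).[x] * (deriv (Dc (rc (cos (th N 0))))).[x] = (N.+1)%:R * x ^+ N.
Proof.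
move=> HN.
have h : deriv (Qp N * Dc (rc (cos (th N 0)))) = deriv ('X^(N.+1) + 1) by rewrite (Q_F _ HN).
have hF : deriv ('X^(N.+1) + 1 : {poly CC}) = 'X^N *+ N.+1.
  by rewrite derivD derivXn -polyC1 derivC addr0.
rewrite hF derivM in h.
by rewrite -!hornerM -hornerD h hornerMn hornerXn mulr_natl.
Qed.


Definition Gp N : {poly CC} := (N.+1)%:R%:P * Qp N - deriv ('X * Qp N).

Lemma G_eval N x : (Gp N).[x] = (N.+1)%:R * (Qp N).[x] - ((Qp N).[x] + x * (deriv (Qp N)).[x]).
Proof. by rewrite /Gp derivM derivX mul1r !hornerE. Qed.

Lemma Dc_eval c x : (Dc c).[x] = x ^+ 2 - 2%:R * c * x + 1.
Proof. by rewrite /Dc !hornerE. Qed.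
Lemma Dc'_eval c x : (deriv (Dc c)).[x] = 2%:R * x - 2%:R * c.
Proof. by rewrite Dc_deriv !hornerE. Qed.

Lemma G_at1 N : le 1 N ->
  (Gp N).[1] * (2%:R - 2%:R * rc (cos (th N 0))) = (N.+1)%:R.
Proof.
move=> HN.
have h1 := Q_eval N 1 HN. have h2 := Q'_eval N 1 HN.
set c := rc _ in h1 h2 *.
set d := (2%:R - 2%:R * c).
have hD : (Dc c).[1] = d by rewrite Dc_eval /d; ring.
have hD' : (deriv (Dc c)).[1] = d by rewrite Dc'_eval /d; ring.
rewrite hD expr1n in h1. rewrite hD hD' expr1n in h2.
rewrite G_eval.
set a := (Qp N).[1] in h1 h2 *. set b := (deriv (Qp N)).[1] in h2 *.
have -> : ((N.+1)%:R * a - (a + 1 * b)) * d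
   = (N.+1)%:R * (a * d) - (b * d + a * d) by ring.
rewrite h2 h1 mulr1; ring.
Qed.

Lemma G_atm1 N : le 1 N ->
  (Gp N).[-1] * (2%:R + 2%:R * rc (cos (th N 0))) = (N.+1)%:R.
Proof.
move=> HN.
have h1 := Q_eval N (-1) HN. have h2 := Q'_eval N (-1) HN.
set c := rc _ in h1 h2 *.
set e := (2%:R + 2%:R * c).
have hD : (Dc c).[-1] = e by rewrite Dc_eval /e; ring.
have hD' : (deriv (Dc c)).[-1] = - e by rewrite Dc'_eval /e; ring.
rewrite hD in h1. rewrite hD hD' in h2.
rewrite G_eval.
set a := (Qp N).[-1] in h1 h2 *. set b := (deriv (Qp N)).[-1] in h2 *.
set s := (-1) ^+ N in h2.
have hs : (-1) ^+ N.+1 = - s :> CC by rewrite exprS mulN1r.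
rewrite hs in h1.
have -> : ((N.+1)%:R * a - (a + -1 * b)) * e
   = (N.+1)%:R * (a * e) + (b * e + a * - e) by ring.
rewrite h2 h1; ring.
Qed.


Lemma rcRplus x y : rc (Rplus x y) = rc x + rc y.
Proof. exact: rmorphD. Qed.

Lemma rcRinv x : rc (Rinv x) = (rc x)^-1.
Proof. exact: fmorphV. Qed.

Lemma rc_dR N : rc (dR N) = 2%:R - 2%:R * rc (cos (th N 0)).
Proof. by rewrite /dR rcRminus rcRM rcR2. Qed.
Lemma rc_eR N : rc (eR N) = 2%:R + 2%:R * rc (cos (th N 0)).
Proof. by rewrite /eR rcRplus rcRM rcR2. Qed.

Lemma hq N K x : le 1 N -> toC (peval (q 1 N K) x) = (toC K * rc (kN N)) * (Gp N).[toC x].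
Proof. by move=> HN; rewrite peval_toP toP_q // hornerCM. Qed.

Lemma hk N K : le 1 N -> peval (q 1 N K) Cone = Cone ->
  (toC K * rc (kN N)) = rc (dR N) / (N.+1)%:R.
Proof.
move=> HN HK.
have h1 := hq N K Cone HN. rewrite HK toC1 in h1.
apply: (mulIf (x := (N.+1)%:R)); first by rewrite pnatr_eq0.
rewrite mulfVK ?pnatr_eq0 // -(G_at1 _ HN) mulrA -h1 mul1r rc_dR //.
Qed.

Lemma claim1 N K z : le 1 N -> peval (q 1 N K) Cone = Cone ->
  toC (peval (q 1 N K) z) = toC (Cmul (RtoC (c2t N)) (Csum1 N (fun j => Cmul (RtoC (cf N j)) (Cpow z (Nat.sub j 1))))).
Proof.
move=> HN HK.
rewrite (hq _ _ _ HN) (hk _ _ HN HK) toC_mul toC_R toC_sum /Gp /Qp (Gsum (fun i => rc (sr (th N 0) i.+1)) N N (leqnn N)) horner_sum !mulr_sumr.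
apply: eq_bigr => i _.
rewrite !hornerE toC_mul toC_R toC_pow /= Nat.sub_0_r.
rewrite mulrA -rcM -(coef_eq2 _ _ HN) !rcRM !rcRinv rcRminus rcRplus !rc_nat rcR1.
rewrite natrB; last by apply: ltnW; exact: ltn_ord.
rewrite -addn1 natrD; ring.
Qed.

Lemma claim2 N K : le 1 N -> peval (q 1 N K) Cone = Cone ->
  toC (peval (q 1 N K) (Copp Cone)) = toC (RtoC (tq N)).
Proof.
move=> HN HK.
rewrite (hq _ _ _ HN) (hk _ _ HN HK) toC_opp toC1 toC_R -(const3 _ HN) rcRdiv rc_dR rc_eR.
have he : 2%:R + 2%:R * rc (cos (th N 0)) != 0.
  rewrite -rc_eR fmorph_eq0; apply/eqP; exact: eR_nz.
have hG : (Gp N).[-1] = (N.+1)%:R / (2%:R + 2%:R * rc (cos (th N 0))).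
  by rewrite -(G_atm1 _ HN) mulfK.
rewrite hG mulrA mulfVK // ?pnatr_eq0. all: try done.
Qed.

Theorem mainTheorem4 (N : nat) (HN : le 1 N) (K : Cx)
  (HK : peval (q 1 N K) Cone = Cone) :
  (forall z : Cx,
     peval (q 1 N K) z =
     Cmul (RtoC (c2t N))
       (Csum1 N (fun j => Cmul (RtoC (cf N j)) (Cpow z (Nat.sub j 1)))))
  /\ peval (q 1 N K) (Copp Cone) = RtoC (tq N).
Proof.
split; [move=> z|]; apply: toC_inj; [exact: claim1 | exact: claim2].
Qed.
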